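(* Let $q$ be a prime power with $3\mid q-1$, $\ell$ divisible by $9$, and let $\alpha,\alpha',\alpha'',\beta,\beta',\beta''\in\mathbb{F}_q^*$ be such that for every perfect colored matching $\mathcal{Z}$ (for $r=3$) and every $\lambda\in\mathbb{F}_q^*$ the family $C_\mathcal{Z}(\lambda)=\{(A_Z(\lambda),S_Z),(A_{Z'}(\lambda),S_{Z'}),(A_{Z''}(\lambda),S_{Z''})\}$ satisfies the subspace condition with $r=3$. Let $\mathcal{X},\mathcal{Y}$ be two perfect colored matchings satisfying the pairing condition and $\lambda_x,\lambda_y\in\mathbb{F}_q^*$ with $\lambda_x^6\ne\lambda_y^6$. Then $C_\mathcal{X}(\lambda_x)\cup C_\mathcal{Y}(\lambda_y)$ satisfies the subspace condition with $r=3$.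
   Context: Vectors are row vectors and matrices act on the right. Subspace condition for $r,\ell$: a family $\{(A_i,S_i)\}_{i=1}^k$ of invertible $\ell\times\ell$ matrices and $(\ell/r)$-dimensional subspaces satisfies it if (i) $S_i+S_iA_i+\dots+S_iA_i^{r-1}=\mathbb{F}_q^\ell$ for all $i$; (ii) $S_iA_j=S_i$ for all $i\ne j$; (iii) every square block submatrix of the $k\times r$ block matrix with $(i,j)$ block $A_i^j$ ($j=0,\dots,r-1$) is invertible. $1,\gamma_1,\gamma_2$ are the cube roots of unity in $\mathbb{F}_q$. A perfect colored matching for $r=3$ is a triple $(Z,Z',Z'')$ of ordered sequences $Z=(z_0,\dots,z_{\ell/3-1})$, $Z'=(z'_0,\dots)$, $Z''=(z''_0,\dots)$ of standard unit vectors of $\mathbb{F}_q^\ell$ whose sets partition $\{e_0,\dots,e_{\ell-1}\}$; edges are $\{z_i,z'_i,z''_i\}$. Pairing condition: every edge of each matching lies in a single color class of the other. $A$ is the $\ell\times\ell$ block diagonal matrix with $3\times3$ blocks $\begin{pmatrix}0&0&1\\1&0&0\\0&1&0\end{pmatrix}$. $N(a,b,u,v,w)$ is the $3\times\ell$ matrix with rows $u$, $u-\frac{a\gamma_1}{\gamma_1-1}v+\frac{b}{\gamma_1-1}w$, $u+\frac{a}{\gamma_1-1}v-\frac{b\gamma_1}{\gamma_1-1}w$. $P_Z$ stacks $N(\alpha,\beta,z_i,z'_i,z''_i)$, $P_{Z'}$ stacks $N(\alpha',\beta',z'_i,z''_i,z_i)$, $P_{Z''}$ stacks $N(\alpha'',\beta'',z''_i,z_i,z'_i)$;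 $A_W(\lambda)=\lambda P_W^{-1}AP_W$, $S_W=\mathrm{span}(W)$ for $W\in\{Z,Z',Z''\}$. *)

(* Defs.v *)
From HB Require Import structures.
From mathcomp Require Import all_boot all_order all_algebra all_fingroup all_field.
Set Implicit Arguments. Unset Strict Implicit. Unset Printing Implicit Defensive.
Import Order.TTheory GRing.Theory Num.Theory.
Local Open Scope ring_scope.

(* Row vectors act on the right of matrices; subspaces of F^l are row spaces. *)

Definition evec {F : fieldType} {l : nat} (j : 'I_l) : 'rV[F]_l := delta_mx 0 j.

(* Subspace condition for r, l on a family {(A_i, S_i)}_{i < k};
   S_i is given by a matrix whose row space is the subspace. *)
Definition subspace_cond {F : fieldType} {k n l : nat} (r : nat)
    (A : 'I_k -> 'M[F]_l) (S : 'I_k -> 'M[F]_(n, l)) : Prop :=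
  [/\ (forall i, A i \in unitmx),
      (forall i, \rank (S i) = (l %/ r)%N),
      (forall i, (\sum_(j < r) <<S i *m A i ^+ j>> == 1%:M)%MS),
      (forall i j, i != j -> (S i *m A j == S i)%MS) &
      (* (iii) every square block submatrix of the k x r block matrix
         with (i,j) block A_i^j is invertible: choose t block rows
         s 0 < ... < s (t-1) and t block columns c 0 < ... < c (t-1). *)
      (forall (t : nat) (s : 'I_t -> 'I_k) (c : 'I_t -> 'I_r),
          {homo s : x y / (x < y)%N} -> {homo c : x y / (x < y)%N} ->
          \mxblock_(a < t, b < t) (A (s a) ^+ c b : 'M[F]_l) \in unitmx)].

(* A perfect colored matching (r = 3): Z c i is the index of the i-th unit
   vector of color c (c = 0,1,2 for Z, Z', Z''). *)
Definition colorset {l : nat} (Z : 'I_3 -> 'I_(l %/ 3) -> 'I_l) (c : 'I_3)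
  : {set 'I_l} := [set Z c i | i in 'I_(l %/ 3)].

Definition perfect_colored_matching {l : nat}
    (Z : 'I_3 -> 'I_(l %/ 3) -> 'I_l) : Prop :=
  (forall c c' : 'I_3, c != c' -> [disjoint colorset Z c & colorset Z c']) /\
  (\bigcup_(c < 3) colorset Z c = setT).

Definition edge {l : nat} (Z : 'I_3 -> 'I_(l %/ 3) -> 'I_l) (i : 'I_(l %/ 3))
  : {set 'I_l} := [set Z c i | c in 'I_3].

Definition pairing_condition {l : nat} (X Y : 'I_3 -> 'I_(l %/ 3) -> 'I_l)
  : Prop :=
  (forall i, exists c, edge X i \subset colorset Y c) /\
  (forall i, exists c, edge Y i \subset colorset X c).

(* the block-diagonal matrix A with 3x3 blocks [[0,0,1],[1,0,0],[0,1,0]] *)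
Definition Ablk {F : fieldType} (l : nat) : 'M[F]_l :=
  \matrix_(i, j) ((((i : nat) %/ 3 == (j : nat) %/ 3) &&
                   ((j : nat) %% 3 == ((i : nat) %% 3 + 2) %% 3))%N)%:R.

(* N(a,b,u,v,w), with g = gamma_1 *)
Definition Nmx {F : fieldType} {l : nat} (g a b : F) (u v w : 'rV[F]_l)
  : 'M[F]_(3, l) :=
  \matrix_(k < 3)
    (if (k : nat) == 0%N then u
     else if (k : nat) == 1%N
          then u - (a * g / (g - 1)) *: v + (b / (g - 1)) *: w
          else u + (a / (g - 1)) *: v - (b * g / (g - 1)) *: w).

(* stacks N(a,b,e_{u i},e_{v i},e_{w i}) for i = 0..l/3-1:
   row 3i+k of the result is row k of the i-th N. *)
Definition Pmx {F : fieldType} {l : nat} (g a b : F)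
    (u v w : 'I_(l %/ 3) -> 'I_l) : 'M[F]_l :=
  \matrix_(r < l)
    (match insub ((r : nat) %/ 3)%N : option 'I_(l %/ 3) with
     | Some i => row (inord ((r : nat) %% 3)) (Nmx g a b (evec (u i)) (evec (v i)) (evec (w i)))
     | None => 0
     end).

Definition c0 : 'I_3 := @Ordinal 3 0 isT.
Definition c1 : 'I_3 := @Ordinal 3 1 isT.
Definition c2 : 'I_3 := @Ordinal 3 2 isT.

Definition PW {F : fieldType} {l : nat} (g a a' a'' b b' b'' : F)
    (Z : 'I_3 -> 'I_(l %/ 3) -> 'I_l) (c : 'I_3) : 'M[F]_l :=
  match (c : nat) with
  | 0 => Pmx g a b (Z c0) (Z c1) (Z c2)
  | 1 => Pmx g a' b' (Z c1) (Z c2) (Z c0)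
  | _ => Pmx g a'' b'' (Z c2) (Z c0) (Z c1)
  end.

Definition AW {F : fieldType} {l : nat} (g a a' a'' b b' b'' : F)
    (Z : 'I_3 -> 'I_(l %/ 3) -> 'I_l) (lam : F) (c : 'I_3) : 'M[F]_l :=
  lam *: (invmx (PW g a a' a'' b b' b'' Z c) *m Ablk l *m PW g a a' a'' b b' b'' Z c).

Definition SW {F : fieldType} {l : nat} (Z : 'I_3 -> 'I_(l %/ 3) -> 'I_l)
    (c : 'I_3) : 'M[F]_(l %/ 3, l) :=
  \matrix_(i < l %/ 3) evec (Z c i).

Definition famU {T : Type} {k1 k2 : nat} (f : 'I_k1 -> T) (h : 'I_k2 -> T)
  : 'I_(k1 + k2) -> T :=
  fun i => match split i with inl a => f a | inr b => h b end.

(* Main.v *)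
Require Import Defs.
From HB Require Import structures.
From mathcomp Require Import all_boot all_order all_algebra all_fingroup all_field.
Import GRing.Theory.
Local Open Scope ring_scope.
From mathcomp Require Import ring zify.
Set Implicit Arguments. Unset Strict Implicit. Unset Printing Implicit Defensive.

Section Block.
Variable F : fieldType.

Lemma unit_blockP (t l : nat) (B : 'I_t -> 'I_t -> 'M[F]_l) :
  (\mxblock_(a < t, b < t) (B a b : 'M[F]_l) \in unitmx) <->
  (forall z : 'I_t -> 'rV[F]_l, (forall b, \sum_a z a *m B a b = 0) -> forall a, z a = 0).
Proof.
split.
  move=> U z hz a.
  have hv : \mxrow_a z a *m \mxblock_(a < t, b < t) (B a b : 'M[F]_l) = 0.
    by rewrite mul_mxrow_mxblock -(mxrow0 (q_ := fun _ : 'I_t => l)); apply: eq_mxrow.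
  move: hv; rewrite -row_free_unit in U.
  move/eqP; rewrite (mulmx_free_eq0 _ U) => /eqP h0.
  by rewrite -(mxrowK z a) h0 submxrow0.
move=> H; rewrite -row_free_unit; apply: inj_row_free => v hv.
rewrite -(submxrowK v) in hv *.
rewrite mul_mxrow_mxblock in hv.
have hz : forall b, \sum_a submxrow v a *m B a b = 0.
  move=> b; move: hv => /(congr1 (fun M => submxrow M b)).
  by rewrite mxrowK submxrow0.
rewrite -(mxrow0 (q_ := fun _ : 'I_t => l)); apply: eq_mxrow => a.
exact: H hz a.
Qed.
End Block.


Section PSec.
Variable F : fieldType.
Variable l : nat.

Lemma ridx_lt (i : 'I_(l %/ 3)) (k : 'I_3) : (3 * i + k < l)%N.
Proof. have := ltn_ord i; have := ltn_ord k; lia. Qed.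

Definition ridx (i : 'I_(l %/ 3)) (k : 'I_3) : 'I_l := Ordinal (ridx_lt i k).

Lemma evecE (j : 'I_l) k : (evec j : 'rV[F]_l) 0 k = (j == k)%:R.
Proof. by rewrite /evec mxE eqxx eq_sym. Qed.

Lemma evec_mul (j : 'I_l) (M : 'M[F]_l) : evec j *m M = row j M.
Proof. by rewrite /evec rowE. Qed.

Lemma Pmx_row (g a b : F) (u v w : 'I_(l %/ 3) -> 'I_l) i k :
  evec (ridx i k) *m Pmx g a b u v w = row k (Nmx g a b (evec (u i)) (evec (v i)) (evec (w i))).
Proof.
rewrite evec_mul; apply/rowP => j; rewrite /Pmx !mxE /=.
have -> : insub ((3 * i + k) %/ 3)%N = Some i.
  have -> : ((3 * i + k) %/ 3 = i)%N by have := ltn_ord k; lia.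
  by rewrite valK.
have -> : inord ((3 * i + k) %% 3) = k.
  apply: val_inj; rewrite /= inordK; have := ltn_ord k; lia.
by rewrite /Nmx !mxE.
Qed.

Definition cc0 : 'I_3 := @Ordinal 3 0 isT.
Definition cc1 : 'I_3 := @Ordinal 3 1 isT.
Definition cc2 : 'I_3 := @Ordinal 3 2 isT.

Lemma Ablk_row_gen i (k k' : 'I_3) : (k' = (k + 2) %% 3 :> nat)%N ->
  evec (ridx i k) *m (Ablk l : 'M[F]_l) = evec (ridx i k').
Proof.
move=> hk; rewrite evec_mul; apply/rowP => j; rewrite /Ablk !mxE eqxx /=.
congr (_%:R); congr (nat_of_bool _); apply/andP/eqP => [[/eqP h1 /eqP h2]|->].
  apply: val_inj => /=; have := ltn_ord k; have := ltn_ord k'; lia.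
rewrite /=; split; apply/eqP; have := ltn_ord k; have := ltn_ord k'; lia.
Qed.

Lemma Nrow0 (g a b : F) (eu ev ew : 'rV[F]_l) : row cc0 (Nmx g a b eu ev ew) = eu.
Proof. by apply/rowP => j; rewrite !mxE. Qed.
Lemma Nrow1 (g a b : F) (eu ev ew : 'rV[F]_l) : row cc1 (Nmx g a b eu ev ew) =
  eu - (a * g / (g - 1)) *: ev + (b / (g - 1)) *: ew.
Proof. by apply/rowP => j; rewrite !mxE. Qed.
Lemma Nrow2 (g a b : F) (eu ev ew : 'rV[F]_l) : row cc2 (Nmx g a b eu ev ew) =
  eu + (a / (g - 1)) *: ev - (b * g / (g - 1)) *: ew.
Proof. by apply/rowP => j; rewrite !mxE. Qed.

Variables (g a b : F) (u v w : 'I_(l %/ 3) -> 'I_l).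
Hypothesis hg2 : g ^+ 2 = -1 - g.
Hypothesis hg1 : g - 1 != 0.
Hypothesis ha : a != 0.
Hypothesis hb : b != 0.
Local Notation P := (Pmx g a b u v w).

Lemma P_u i : evec (ridx i cc0) *m P = evec (u i).
Proof. by rewrite Pmx_row Nrow0. Qed.

Definition xv i : 'rV[F]_l :=
  a^-1 *: (evec (ridx i cc0) + g ^+ 2 *: evec (ridx i cc1) + g *: evec (ridx i cc2)).
Definition xw i : 'rV[F]_l :=
  b^-1 *: (evec (ridx i cc0) + g *: evec (ridx i cc1) + g ^+ 2 *: evec (ridx i cc2)).

Lemma P_v i : xv i *m P = evec (v i).
Proof.
rewrite /xv -!scalemxAl !mulmxDl -!scalemxAl !Pmx_row Nrow0 Nrow1 Nrow2.
apply/rowP => j; rewrite !mxE.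
field: hg2; by rewrite hg1 ha.
Qed.

Lemma P_w i : xw i *m P = evec (w i).
Proof.
rewrite /xw -!scalemxAl !mulmxDl -!scalemxAl !Pmx_row Nrow0 Nrow1 Nrow2.
apply/rowP => j; rewrite !mxE.
field: hg2; by rewrite hg1 hb.
Qed.

Lemma A0 i : evec (ridx i cc0) *m (Ablk l : 'M[F]_l) = evec (ridx i cc2).
Proof. exact: Ablk_row_gen. Qed.
Lemma A1 i : evec (ridx i cc1) *m (Ablk l : 'M[F]_l) = evec (ridx i cc0).
Proof. exact: Ablk_row_gen. Qed.
Lemma A2 i : evec (ridx i cc2) *m (Ablk l : 'M[F]_l) = evec (ridx i cc1).
Proof. exact: Ablk_row_gen. Qed.

Lemma xv_A i : xv i *m Ablk l = g ^+ 2 *: xv i.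
Proof.
rewrite /xv -!scalemxAl !mulmxDl -!scalemxAl A0 A1 A2.
apply/rowP => j; rewrite !mxE.
ring: hg2.
Qed.

Lemma xw_A i : xw i *m Ablk l = g *: xw i.
Proof.
rewrite /xw -!scalemxAl !mulmxDl -!scalemxAl A0 A1 A2.
apply/rowP => j; rewrite !mxE.
ring: hg2.
Qed.

Hypothesis cover : forall j : 'I_l, exists i, [\/ j = u i, j = v i | j = w i].

Lemma P_unit : P \in unitmx.
Proof.
rewrite -row_full_unit -sub1mx; apply/row_subP => j; rewrite row1.
have [i [->|->|->]] := cover j; rewrite -/(evec _).
- by rewrite -P_u submxMl.
- by rewrite -P_v submxMl.
- by rewrite -P_w submxMl.
Qed.

Variable lam : F.
Local Notation A := (lam *: (invmx P *m Ablk l *m P)).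

Lemma act_gen (x e : 'rV[F]_l) mu : x *m P = e -> x *m Ablk l = mu *: x -> e *m A = (lam * mu) *: e.
Proof.
move=> hx hA; rewrite -hx -scalemxAr !mulmxA (mulmxK P_unit) hA -scalemxAl scalerA.
by rewrite mulrC.
Qed.

Lemma act_u i : evec (u i) *m A =
  lam *: (evec (u i) + (a / (g - 1)) *: evec (v i) - (b * g / (g - 1)) *: evec (w i)).
Proof.
by rewrite -{1}P_u -scalemxAr !mulmxA (mulmxK P_unit) A0 Pmx_row Nrow2.
Qed.

Lemma act_v i : evec (v i) *m A = (lam * g ^+ 2) *: evec (v i).
Proof. exact: act_gen (P_v i) (xv_A i). Qed.

Lemma act_w i : evec (w i) *m A = (lam * g) *: evec (w i).
Proof. exact: act_gen (P_w i) (xw_A i). Qed.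

End PSec.


Section DSec.
Variable F : fieldType.
Variable l : nat.

Definition D (S : {set 'I_l}) : 'M[F]_l := diag_mx (\row_j (j \in S)%:R).

Lemma DE (S : {set 'I_l}) i j : D S i j = ((i \in S) && (i == j))%:R.
Proof. by rewrite /D !mxE; case: (i \in S); case: (i == j). Qed.

Lemma DD (S T : {set 'I_l}) : D S *m D T = D (S :&: T).
Proof.
apply/matrixP => i j; rewrite /D mul_diag_mx !mxE inE.
by case: (i \in S); case: (i \in T); case: (i == j); rewrite ?mulr0 ?mul1r ?mul0r.
Qed.

Lemma D0 : D set0 = 0.
Proof. by apply/matrixP => i j; rewrite DE inE !mxE. Qed.

Definition partition3 (S0 S1 S2 : {set 'I_l}) :=
  [/\ S0 :&: S1 = set0, S0 :&: S2 = set0, S1 :&: S2 = set0 & S0 :|: S1 :|: S2 = setT].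

Lemma Dsum S0 S1 S2 : partition3 S0 S1 S2 -> D S0 + D S1 + D S2 = 1%:M.
Proof.
case=> h01 h02 h12 hU; apply/matrixP => i j; rewrite !mxE.
have : i \in S0 :|: S1 :|: S2 by rewrite hU inE.
have n01 : (i \in S0) && (i \in S1) = false by rewrite -in_setI h01 inE.
have n02 : (i \in S0) && (i \in S2) = false by rewrite -in_setI h02 inE.
have n12 : (i \in S1) && (i \in S2) = false by rewrite -in_setI h12 inE.
move: n01 n02 n12; rewrite !inE.
by case: (i \in S0); case: (i \in S1); case: (i \in S2); case: (i == j) => //= *;
  rewrite ?mulr0n ?mulr1n ?addr0 ?add0r.
Qed.

Lemma DC S T : D S *m D T = D T *m D S.
Proof. by rewrite !DD setIC. Qed.

Lemma Did S : D S *m D S = D S.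
Proof. by rewrite DD setIid. Qed.

Lemma Ddisj S T : S :&: T = set0 -> D S *m D T = 0.
Proof. by rewrite DD => ->; rewrite D0. Qed.

Lemma evecD (j : 'I_l) S : evec j *m D S = (j \in S)%:R *: (evec j : 'rV[F]_l).
Proof.
apply/rowP => k; rewrite /D mul_mx_diag !mxE.
by rewrite eqxx /=; case: (k == j) /eqP => [->|]; rewrite ?mulr0 ?mul0r ?mulr1 ?mul1r.
Qed.

Lemma matrix_evecP (M N : 'M[F]_l) : (forall j, evec j *m M = evec j *m N) -> M = N.
Proof. by move=> h; apply/row_matrixP => j; rewrite !rowE -/(evec _) h. Qed.

Definition mshape (A : 'M[F]_l) (S0 S1 S2 : {set 'I_l}) (m k1 k2 : F) :=
  [/\ A *m D S0 = m *: D S0, D S1 *m A = k1 *: D S1 & D S2 *m A = k2 *: D S2].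

Definition comm (A : 'M[F]_l) (S : {set 'I_l}) := A *m D S = D S *m A.

Lemma vec_split S0 S1 S2 (z : 'rV[F]_l) : partition3 S0 S1 S2 ->
  z = z *m D S0 + z *m D S1 + z *m D S2.
Proof. by move=> hp; rewrite -!mulmxDr Dsum // mulmx1. Qed.

Lemma partC S0 S1 S2 : partition3 S0 S1 S2 ->
  ([/\ D S0 *m D S1 = 0, D S0 *m D S2 = 0 & D S1 *m D S0 = 0] /\
   [/\ D S1 *m D S2 = 0, D S2 *m D S0 = 0 & D S2 *m D S1 = 0]).
Proof.
by case=> h01 h02 h12 _; rewrite !Ddisj // setIC.
Qed.

Lemma shape_side S0 S1 S2 A m k1 k2 (z : 'rV[F]_l) :
  partition3 S0 S1 S2 -> mshape A S0 S1 S2 m k1 k2 ->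
  [/\ z *m A *m D S0 = m *: (z *m D S0),
      z *m D S0 = 0 -> z *m A *m D S1 = k1 *: (z *m D S1) &
      z *m D S0 = 0 -> z *m A *m D S2 = k2 *: (z *m D S2)].
Proof.
move=> hp [h0 h1 h2]; have [[c01 c02 c10] [c12 c20 c21]] := partC hp.
split; first by rewrite -mulmxA h0 scalemxAr.
  move=> hz; rewrite {1}(vec_split z hp) !mulmxDl hz !mul0mx add0r.
  rewrite -(mulmxA z (D S1) A) -(mulmxA z (D S2) A) h1 h2 -!scalemxAr -!scalemxAl.
  by rewrite -!mulmxA Did c21 mulmx0 scaler0 addr0.
move=> hz; rewrite {1}(vec_split z hp) !mulmxDl hz !mul0mx add0r.
rewrite -(mulmxA z (D S1) A) -(mulmxA z (D S2) A) h1 h2 -!scalemxAr -!scalemxAl.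
by rewrite -!mulmxA Did c12 mulmx0 scaler0 add0r.
Qed.

Lemma Lsc S0 S1 S2 A m k1 k2 s (z : 'rV[F]_l) :
  partition3 S0 S1 S2 -> mshape A S0 S1 S2 m k1 k2 ->
  s != m -> s != k1 -> s != k2 -> z *m A = s *: z -> z = 0.
Proof.
move=> hp hs n0 n1 n2 hz.
have [e0 e1 e2] := shape_side z hp hs.
have z0 : z *m D S0 = 0.
  move: e0; rewrite hz -scalemxAl => /eqP; rewrite -subr_eq0 -scalerBl scaler_eq0.
  by rewrite subr_eq0 (negPf n0) => /eqP.
have z1 : z *m D S1 = 0.
  move: (e1 z0); rewrite hz -scalemxAl => /eqP; rewrite -subr_eq0 -scalerBl scaler_eq0.
  by rewrite subr_eq0 (negPf n1) => /eqP.
have z2 : z *m D S2 = 0.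
  move: (e2 z0); rewrite hz -scalemxAl => /eqP; rewrite -subr_eq0 -scalerBl scaler_eq0.
  by rewrite subr_eq0 (negPf n2) => /eqP.
by rewrite (vec_split z hp) z0 z1 z2 !addr0.
Qed.


Lemma DiffInv U0 U1 U2 V0 V1 V2 A B m k1 k2 n r1 r2 (z : 'rV[F]_l) :
  partition3 U0 U1 U2 -> partition3 V0 V1 V2 ->
  mshape A U0 U1 U2 m k1 k2 -> mshape B V0 V1 V2 n r1 r2 ->
  comm B U0 -> comm B U1 -> comm B U2 ->
  (forall x y, x \in [:: m; k1; k2] -> y \in [:: n; r1; r2] -> x != y) ->
  z *m A = z *m B -> z = 0.
Proof.
move=> hU hV hA hB c0 c1 c2 hne hz.
have [e0 e1 e2] := shape_side z hU hA.
have z0 : z *m D U0 = 0.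
  apply: (Lsc (s := m) hV hB); rewrite ?hne ?inE ?eqxx ?orbT //.
  by rewrite -mulmxA -c0 mulmxA -hz e0.
have z1 : z *m D U1 = 0.
  apply: (Lsc (s := k1) hV hB); rewrite ?hne ?inE ?eqxx ?orbT //.
  by rewrite -mulmxA -c1 mulmxA -hz (e1 z0).
have z2 : z *m D U2 = 0.
  apply: (Lsc (s := k2) hV hB); rewrite ?hne ?inE ?eqxx ?orbT //.
  by rewrite -mulmxA -c2 mulmxA -hz (e2 z0).
by rewrite (vec_split z hU) z0 z1 z2 !addr0.
Qed.

Lemma shape_sq A S0 S1 S2 m k1 k2 : mshape A S0 S1 S2 m k1 k2 ->
  mshape (A *m A) S0 S1 S2 (m ^+ 2) (k1 ^+ 2) (k2 ^+ 2).
Proof.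
case=> h0 h1 h2; split.
- by rewrite -mulmxA h0 -scalemxAr h0 scalerA expr2.
- by rewrite mulmxA h1 -scalemxAl h1 scalerA expr2.
- by rewrite mulmxA h2 -scalemxAl h2 scalerA expr2.
Qed.

Lemma comm_sq A S : comm A S -> comm (A *m A) S.
Proof. by rewrite /comm => h; rewrite -mulmxA h !mulmxA h. Qed.

Lemma L3 A1 A2 s (w1 w2 y : 'rV[F]_l) :
  (forall z : 'rV[F]_l, z *m A1 = s *: z -> z = 0) ->
  (forall z : 'rV[F]_l, z *m A2 = s *: z -> z = 0) ->
  (forall z : 'rV[F]_l, z *m A1 = z *m A2 -> z = 0) ->
  w1 + w2 + y = 0 ->
  w1 *m A1 + w2 *m A2 + s *: y = 0 ->
  w1 *m (A1 *m A1) + w2 *m (A2 *m A2) + (s ^+ 2) *: y = 0 ->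
  [/\ w1 = 0, w2 = 0 & y = 0].
Proof.
move=> i1 i2 i12 e1 e2 e3.
have ey : y = - (w1 + w2) by apply/eqP; rewrite -addr_eq0 addrC e1.
rewrite ey in e2 e3.
pose q1 := w1 *m A1 - s *: w1; pose q2 := w2 *m A2 - s *: w2.
have hq : q1 + q2 = 0.
  rewrite -e2 /q1 /q2; apply/rowP => j; rewrite !mxE; ring.
have hq' : q1 *m A1 + q2 *m A2 = 0.
  have -> : q1 *m A1 + q2 *m A2 = (w1 *m (A1 *m A1) + w2 *m (A2 *m A2) + (s ^+ 2) *: - (w1 + w2))
       - s *: (w1 *m A1 + w2 *m A2 + s *: - (w1 + w2)).
    rewrite /q1 /q2 !mulmxBl -!scalemxAl !mulmxA; apply/rowP => j; rewrite !mxE; ring.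
  by rewrite e3 e2 scaler0 subr0.
have hq2 : q2 = - q1 by apply/eqP; rewrite -addr_eq0 addrC hq.
have q10 : q1 = 0.
  apply: i12; apply/eqP; rewrite -subr_eq0; apply/eqP.
  by rewrite -hq' hq2 mulNmx.
have w10 : w1 = 0 by apply: i1; apply/eqP; rewrite -subr_eq0 -/q1 q10.
have w20 : w2 = 0.
  apply: i2; apply/eqP; rewrite -subr_eq0 -/q2 hq2 q10 oppr0 //.
by rewrite ey w10 w20 addr0 oppr0.
Qed.


Lemma stageL S A1 A2 B s (z1 z2 y : 'rV[F]_l) :
  comm A1 S -> comm A2 S ->
  (forall z : 'rV[F]_l, z *m A1 = s *: z -> z = 0) ->
  (forall z : 'rV[F]_l, z *m A2 = s *: z -> z = 0) ->
  (forall z : 'rV[F]_l, z *m A1 = z *m A2 -> z = 0) ->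
  y *m B *m D S = s *: (y *m D S) ->
  y *m (B *m B) *m D S = (s ^+ 2) *: (y *m D S) ->
  z1 + z2 + y = 0 ->
  z1 *m A1 + z2 *m A2 + y *m B = 0 ->
  z1 *m (A1 *m A1) + z2 *m (A2 *m A2) + y *m (B *m B) = 0 ->
  [/\ z1 *m D S = 0, z2 *m D S = 0 & y *m D S = 0].
Proof.
move=> c1 c2 i1 i2 i12 hB hB2 e1 e2 e3.
have cc1 := comm_sq c1; have cc2 := comm_sq c2.
apply: L3 i1 i2 i12 _ _ _.
- by rewrite -!mulmxDl e1 mul0mx.
- by rewrite -hB -!mulmxA -c1 -c2 !mulmxA -!mulmxDl e2 mul0mx.
- by rewrite -hB2 -!(mulmxA z1) -!(mulmxA z2) -cc1 -cc2 !mulmxA -!mulmxDl -!mulmxA e3 mul0mx.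
Qed.

Lemma Stage3 V0 V1 V2 A1 A2 B n r1 r2 (z1 z2 y : 'rV[F]_l) :
  partition3 V0 V1 V2 -> mshape B V0 V1 V2 n r1 r2 ->
  comm A1 V0 -> comm A1 V1 -> comm A1 V2 ->
  comm A2 V0 -> comm A2 V1 -> comm A2 V2 ->
  (forall s, s \in [:: n; r1; r2] -> forall z : 'rV[F]_l, z *m A1 = s *: z -> z = 0) ->
  (forall s, s \in [:: n; r1; r2] -> forall z : 'rV[F]_l, z *m A2 = s *: z -> z = 0) ->
  (forall z : 'rV[F]_l, z *m A1 = z *m A2 -> z = 0) ->
  z1 + z2 + y = 0 ->
  z1 *m A1 + z2 *m A2 + y *m B = 0 ->
  z1 *m (A1 *m A1) + z2 *m (A2 *m A2) + y *m (B *m B) = 0 ->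
  [/\ z1 = 0, z2 = 0 & y = 0].
Proof.
move=> hV hB a0 a1 a2 b0 b1 b2 i1 i2 i12 e1 e2 e3.
have [s0 s1 s2] := shape_side y hV hB.
have [t0 t1 t2] := shape_side (y *m B) hV hB.
have [u1 u2 u3] : [/\ z1 *m D V0 = 0, z2 *m D V0 = 0 & y *m D V0 = 0].
  apply: (stageL (s := n) a0 b0 _ _ i12 s0 _ e1 e2 e3).
  - by apply: i1; rewrite inE eqxx.
  - by apply: i2; rewrite inE eqxx.
  by rewrite mulmxA t0 s0 scalerA expr2.
have yB0 : y *m B *m D V0 = 0 by rewrite s0 u3 scaler0.
have [v1 v2 v3] : [/\ z1 *m D V1 = 0, z2 *m D V1 = 0 & y *m D V1 = 0].
  apply: (stageL (s := r1) a1 b1 _ _ i12 (s1 u3) _ e1 e2 e3).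
  - by apply: i1; rewrite !inE eqxx orbT.
  - by apply: i2; rewrite !inE eqxx orbT.
  by rewrite mulmxA (t1 yB0) (s1 u3) scalerA expr2.
have [w1 w2 w3] : [/\ z1 *m D V2 = 0, z2 *m D V2 = 0 & y *m D V2 = 0].
  apply: (stageL (s := r2) a2 b2 _ _ i12 (s2 u3) _ e1 e2 e3).
  - by apply: i1; rewrite !inE eqxx !orbT.
  - by apply: i2; rewrite !inE eqxx !orbT.
  by rewrite mulmxA (t2 yB0) (s2 u3) scalerA expr2.
by rewrite (vec_split z1 hV) (vec_split z2 hV) (vec_split y hV) u1 u2 u3 v1 v2 v3 w1 w2 w3 !addr0.
Qed.

End DSec.


Lemma ord3_cases (p q r c : 'I_3) : p != q -> q != r -> p != r ->
  [\/ c = p, c = q | c = r].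
Proof.
case: p => [[|[|[|?]]] hp] //; case: q => [[|[|[|?]]] hq] //; case: r => [[|[|[|?]]] hr] //;
case: c => [[|[|[|?]]] hc] // => /= *;
  first [ by apply: Or31; apply: val_inj | by apply: Or32; apply: val_inj
        | by apply: Or33; apply: val_inj | idtac ].
Qed.

Section Pcm.
Variable l : nat.
Variable Z : 'I_3 -> 'I_(l %/ 3) -> 'I_l.
Hypothesis hZ : perfect_colored_matching Z.

Lemma pcm_cover j : exists c i, j = Z c i.
Proof.
have : j \in \bigcup_(c < 3) colorset Z c by case: hZ => _ ->; rewrite inE.
by case/bigcupP => c _ /imsetP [i _ ->]; exists c, i.
Qed.

Lemma pcm_mem c i c' : (Z c i \in colorset Z c') = (c == c').
Proof.
case: (eqVneq c c') => [<-|ne]; first by apply: imset_f.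
case: hZ => hd _; apply: (disjointFr (hd _ _ ne)).
exact: imset_f.
Qed.

Lemma pcm_part p q r : p != q -> q != r -> p != r ->
  partition3 (colorset Z p) (colorset Z q) (colorset Z r).
Proof.
move=> pq qr pr; case: hZ => hd _; split; try by apply: disjoint_setI0; apply: hd.
apply/setP => j; rewrite !inE; have [c [i ->]] := pcm_cover j.
by rewrite !pcm_mem; case: (ord3_cases c pq qr pr) => ->; rewrite eqxx ?orbT.
Qed.
End Pcm.

Section Shape.
Variable F : fieldType.
Variables (g a b lam : F) (l : nat).
Hypothesis hg2 : g ^+ 2 = -1 - g.
Hypothesis hg1 : g - 1 != 0.
Hypothesis ha : a != 0.
Hypothesis hb : b != 0.
Variable Z : 'I_3 -> 'I_(l %/ 3) -> 'I_l.
Hypothesis hZ : perfect_colored_matching Z.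
Variables p q r : 'I_3.
Hypotheses (pq : p != q) (qr : q != r) (pr : p != r).

Local Notation P := (Pmx g a b (Z p) (Z q) (Z r)).
Local Notation A := (lam *: (invmx P *m Ablk l *m P)).

Lemma cov : forall j : 'I_l, exists i, [\/ j = Z p i, j = Z q i | j = Z r i].
Proof.
move=> j; have [c [i ->]] := pcm_cover hZ j; exists i.
by case: (ord3_cases c pq qr pr) => ->; [apply: Or31 | apply: Or32 | apply: Or33].
Qed.

Let qp : q != p. Proof. by rewrite eq_sym. Qed.
Let rq : r != q. Proof. by rewrite eq_sym. Qed.
Let rp : r != p. Proof. by rewrite eq_sym. Qed.

Ltac simp := rewrite ?mulmxA ?evecD -?scalemxAl ?(act_u hg2 hg1 ha hb cov) ?(act_v hg2 hg1 ha hb cov)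
   ?(act_w hg2 hg1 ha hb cov); do 3 rewrite -?scalemxAl -?scalemxAr ?mulmxDl ?mulmxBl ?mulNmx ?evecD
   ?(pcm_mem hZ) ?eqxx ?(negPf pq) ?(negPf qr) ?(negPf pr) ?(negPf qp)
   ?(negPf rq) ?(negPf rp) /= ?mulr1n ?mulr0n ?scale1r ?scale0r.

Lemma AW_shape : mshape A (colorset Z p) (colorset Z q) (colorset Z r) lam (lam * g ^+ 2) (lam * g).
Proof.
split; apply: matrix_evecP => j; have [c [i ->]] := pcm_cover hZ j;
  case: (ord3_cases c pq qr pr) => ->; simp; apply/rowP => k; rewrite !mxE; ring.
Qed.

Lemma AW_comm (S : {set 'I_l}) : (forall i c c', (Z c i \in S) = (Z c' i \in S)) -> comm A S.
Proof.
move=> hS; rewrite /comm; apply: matrix_evecP => j; have [c [i ->]] := pcm_cover hZ j.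
case: (ord3_cases c pq qr pr) => ->; simp; rewrite ?(hS i q p) ?(hS i r p);
  apply/rowP => k; rewrite !mxE; ring.
Qed.

End Shape.


Section Gen.
Variable F : fieldType.
Variable l : nat.

Lemma cancel_unit (A : 'M[F]_l) (z : 'rV[F]_l) : A \in unitmx -> z *m A = 0 -> z = 0.
Proof. by move=> U h; rewrite -(mulmxK U z) h mul0mx. Qed.

Lemma unit_exp (A : 'M[F]_l) k : A \in unitmx -> A ^+ k \in unitmx.
Proof.
move=> U; elim: k => [|k IH]; first by rewrite expr0 -idmxE unitmx1.
by rewrite exprS -mulmxE unitmx_mul U IH.
Qed.

Lemma mixed2 (A B : 'M[F]_l) (c0 c1 : nat) (z0 z1 : 'rV[F]_l) :
  A \in unitmx -> B \in unitmx ->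
  (forall z : 'rV[F]_l, z *m A = z *m B -> z = 0) ->
  (forall z : 'rV[F]_l, z *m (A *m A) = z *m (B *m B) -> z = 0) ->
  (c0 < c1)%N -> (c1 < 3)%N ->
  z0 *m A ^+ c0 + z1 *m B ^+ c0 = 0 -> z0 *m A ^+ c1 + z1 *m B ^+ c1 = 0 ->
  z0 = 0 /\ z1 = 0.
Proof.
move=> UA UB i1 i2.
case: c0 => [|[|[|?]]] // ; case: c1 => [|[|[|?]]] // _ _;
  rewrite ?expr0 ?expr1 ?expr2 -?idmxE ?mulmx1 -?mulmxE => e1 e2.
- have ez : z1 = - z0 by apply/eqP; rewrite -addr_eq0 addrC e1.
  have z00 : z0 = 0.
    by apply: i1; apply/eqP; rewrite -subr_eq0 -mulNmx -ez e2.
  by split => //; rewrite ez z00 oppr0.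
- have ez : z1 = - z0 by apply/eqP; rewrite -addr_eq0 addrC e1.
  have z00 : z0 = 0.
    by apply: i2; apply/eqP; rewrite -subr_eq0 -mulNmx -ez e2.
  by split => //; rewrite ez z00 oppr0.
- have ez : z1 *m B = - (z0 *m A) by apply/eqP; rewrite -addr_eq0 addrC e1.
  have w0 : z0 *m A = 0.
    apply: i1; apply/eqP; rewrite -subr_eq0 -mulNmx -ez.
    by rewrite !mulmxA in e2; rewrite e2.
  have z00 := cancel_unit UA w0.
  split => //; apply: cancel_unit UB _; by rewrite ez w0 oppr0.
Qed.

Lemma famU_lo T (f h : 'I_3 -> T) (i : 'I_(3 + 3)) : (i < 3)%N -> famU f h i = f (inord i).
Proof.
rewrite /famU; case: splitP => x hx hi //.
by congr f; apply: val_inj; rewrite /= inordK hx // ltn_ord.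
Qed.

Lemma famU_hi T (f h : 'I_3 -> T) (i : 'I_(3 + 3)) : (3 <= i)%N -> famU f h i = h (inord (i - 3)).
Proof.
rewrite /famU; case: splitP => x hx hi.
  by move: hi; rewrite hx; have := ltn_ord x; lia.
by congr h; apply: val_inj; rewrite /= inordK hx; have := ltn_ord x; lia.
Qed.

Definition kern (t : nat) (M : 'I_t -> 'I_t -> 'M[F]_l) :=
  forall z : 'I_t -> 'rV[F]_l, (forall b, \sum_a z a *m M a b = 0) -> forall a, z a = 0.

Lemma fromX (FX FY : 'I_3 -> 'M[F]_l) n (SX : 'I_3 -> 'M[F]_(n, l)) :
  subspace_cond 3 FX SX ->
  forall t (s : 'I_t -> 'I_(3 + 3)) (c : 'I_t -> 'I_3),
  {homo s : x y / (x < y)%N} -> {homo c : x y / (x < y)%N} -> (forall a, s a < 3)%N ->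
  kern (fun a b => famU FX FY (s a) ^+ c b).
Proof.
case=> _ _ _ _ H t s c hs hc hlt.
have hs' : {homo (fun a => (inord (s a) : 'I_3)) : x y / (x < y)%N}.
  by move=> x y /hs; rewrite !inordK //; apply: hlt.
have := H t _ c hs' hc; rewrite unit_blockP => K z hz; apply: K => b.
rewrite -[RHS](hz b); apply: eq_bigr => a _; by rewrite famU_lo.
Qed.

Lemma fromY (FX FY : 'I_3 -> 'M[F]_l) n (SY : 'I_3 -> 'M[F]_(n, l)) :
  subspace_cond 3 FY SY ->
  forall t (s : 'I_t -> 'I_(3 + 3)) (c : 'I_t -> 'I_3),
  {homo s : x y / (x < y)%N} -> {homo c : x y / (x < y)%N} -> (forall a, 3 <= s a)%N ->
  kern (fun a b => famU FX FY (s a) ^+ c b).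
Proof.
case=> _ _ _ _ H t s c hs hc hlt.
have hs' : {homo (fun a => (inord (s a - 3) : 'I_3)) : x y / (x < y)%N}.
  move=> x y /hs; rewrite !inordK; try (have := ltn_ord (s x); have := ltn_ord (s y); lia).
  have := hlt x; have := hlt y; lia.
have := H t _ c hs' hc; rewrite unit_blockP => K z hz; apply: K => b.
rewrite -[RHS](hz b); apply: eq_bigr => a _; by rewrite famU_hi.
Qed.

Lemma inj_fam (FX : 'I_3 -> 'M[F]_l) n (SX : 'I_3 -> 'M[F]_(n, l)) :
  subspace_cond 3 FX SX -> forall p q : 'I_3, p != q ->
  forall z : 'rV[F]_l, z *m FX p = z *m FX q -> z = 0.
Proof.
case=> _ _ _ _ H.
suff gen : forall p q : 'I_3, (p < q)%N -> forall z : 'rV[F]_l, z *m FX p = z *m FX q -> z = 0.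
  move=> p q; case: (ltngtP p q) => [lt _|lt _|/val_inj -> /eqP //].
    exact: gen.
  by move=> z hz; apply: (gen q p lt); rewrite hz.
move=> p q lt z hz.
pose s := fun a : 'I_2 => if val a == 0%N then p else q.
pose c := fun a : 'I_2 => (inord a : 'I_3).
have hs : {homo s : x y / (x < y)%N}.
  by rewrite /s => [[[|[|?]] ?]] [[|[|?]] ?].
have hc : {homo c : x y / (x < y)%N}.
  by rewrite /c => [[[|[|?]] ?]] [[|[|?]] ?] //=; rewrite !inordK.
have := H 2 s c hs hc; rewrite unit_blockP => K.
pose z' := fun a : 'I_2 => if val a == 0%N then z else - z.
have := K z' _ ord0; apply => b.
rewrite big_ord_recl big_ord1 /z' /s /=.
case: b => [[|[|?]] hb] //; rewrite /c /=.
- have -> : (inord 0 : 'I_3) = 0 by apply: val_inj; rewrite /= inordK.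
  by rewrite !expr0 mulNmx addrN.
- have -> : (inord 1 : 'I_3) = 1 by apply: val_inj; rewrite /= inordK.
  by rewrite !expr1 hz mulNmx addrN.
Qed.

End Gen.


Section Main.
Variable F : fieldType.
Variables (g a a' a'' b b' b'' : F) (l : nat).
Hypothesis hg2 : g ^+ 2 = -1 - g.
Hypothesis hg1 : g - 1 != 0.
Hypotheses (ha : a != 0) (ha' : a' != 0) (ha'' : a'' != 0)
  (hb : b != 0) (hb' : b' != 0) (hb'' : b'' != 0).

Lemma c01 : c0 != c1. Proof. by []. Qed.
Lemma c12 : c1 != c2. Proof. by []. Qed.
Lemma c02 : c0 != c2. Proof. by []. Qed.

Lemma AWp (Z : 'I_3 -> 'I_(l %/ 3) -> 'I_l) (hZ : perfect_colored_matching Z) lam p :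
  exists q r, [/\ p != q, q != r, p != r &
    mshape (AW g a a' a'' b b' b'' Z lam p) (colorset Z p) (colorset Z q) (colorset Z r)
      lam (lam * g ^+ 2) (lam * g)].
Proof.
case: (ord3_cases p c01 c12 c02) => ->.
- exists c1, c2; split => //; rewrite /AW /PW /=; exact: AW_shape.
- exists c2, c0; split => //; rewrite /AW /PW /=; exact: AW_shape.
- exists c0, c1; split => //; rewrite /AW /PW /=; exact: AW_shape.
Qed.

Lemma AWc (Z : 'I_3 -> 'I_(l %/ 3) -> 'I_l) (hZ : perfect_colored_matching Z) lam p
  (S : {set 'I_l}) : (forall i c c', (Z c i \in S) = (Z c' i \in S)) ->
  comm (AW g a a' a'' b b' b'' Z lam p) S.
Proof.
move=> hS; case: (ord3_cases p c01 c12 c02) => ->; rewrite /AW /PW /=.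
- by apply: AW_comm.
- by apply: AW_comm.
- by apply: AW_comm.
Qed.


Lemma mem_cs (W : 'I_3 -> 'I_(l %/ 3) -> 'I_l) (hW : perfect_colored_matching W) y d c :
  y \in colorset W d -> (y \in colorset W c) = (d == c).
Proof.
have [c' [i' ->]] := pcm_cover hW y.
by rewrite !(pcm_mem hW) => /eqP ->.
Qed.

Lemma close_gen (Z W : 'I_3 -> 'I_(l %/ 3) -> 'I_l) (hW : perfect_colored_matching W) :
  (forall i, exists d, edge Z i \subset colorset W d) ->
  forall c i c1 c2, (Z c1 i \in colorset W c) = (Z c2 i \in colorset W c).
Proof.
move=> hp c i c1 c2; have [d hd] := hp i.
have m1 : Z c1 i \in colorset W d by apply: (subsetP hd); apply: imset_f.
have m2 : Z c2 i \in colorset W d by apply: (subsetP hd); apply: imset_f.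
by rewrite (mem_cs hW c m1) (mem_cs hW c m2).
Qed.

Lemma cross_ii (W : 'I_3 -> 'I_(l %/ 3) -> 'I_l) (hW : perfect_colored_matching W) c
  (A : 'M[F]_l) : comm A (colorset W c) -> A \in unitmx ->
  ((SW W c : 'M[F]_(l %/ 3, l)) *m A == SW W c)%MS.
Proof.
move=> hc U.
have e1 : (SW W c : 'M[F]_(l %/ 3, l)) = SW W c *m D F (colorset W c).
  apply/row_matrixP => i; rewrite row_mul /SW rowK evecD (pcm_mem hW) eqxx.
  by rewrite scale1r.
have sub : (D F (colorset W c) <= (SW W c : 'M[F]_(l %/ 3, l)))%MS.
  apply/row_subP => j; rewrite rowE -/(evec _) evecD.
  case: (boolP (j \in colorset W c)) => hj; last by rewrite scale0r sub0mx.
  case/imsetP: hj => i _ ->; rewrite scale1r.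
  have er : row i (SW W c : 'M[F]_(l %/ 3, l)) = evec (W c i) by rewrite /SW rowK.
  by rewrite -er row_sub.
have le : ((SW W c : 'M[F]_(l %/ 3, l)) *m A <= SW W c)%MS.
  rewrite {1}e1 -mulmxA -hc mulmxA.
  exact: submx_trans (submxMl _ _) sub.
have rk : \rank ((SW W c : 'M[F]_(l %/ 3, l)) *m A) = \rank (SW W c : 'M[F]_(l %/ 3, l)).
  by apply: mxrankMfree; rewrite row_free_unit.
by rewrite -(mxrank_leqif_eq le).2 rk.
Qed.

Lemma cube_g (g3 : g ^+ 3 = 1) (u : F) k : (u * g ^+ k) ^+ 3 = u ^+ 3.
Proof. by rewrite exprMn -exprM mulnC exprM g3 expr1n mulr1. Qed.

End Main.


Definition e0 : 'I_2 := @Ordinal 2 0 isT.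
Definition e1 : 'I_2 := @Ordinal 2 1 isT.

Lemma sum2 (V : zmodType) (f : 'I_2 -> V) : \sum_(a < 2) f a = f e0 + f e1.
Proof. by rewrite !big_ord_recl big_ord0 addr0; congr (f _ + f _); apply: val_inj. Qed.

Lemma sum3 (V : zmodType) (f : 'I_3 -> V) : \sum_(a < 3) f a = f c0 + f c1 + f c2.
Proof.
by rewrite !big_ord_recl big_ord0 addr0 addrA; congr (f _ + f _ + f _); apply: val_inj.
Qed.

Lemma all2I (P : 'I_2 -> Prop) : P e0 -> P e1 -> forall a, P a.
Proof.
move=> h0 h1 [[|[|?]] ha] //.
- by have -> : Ordinal ha = e0 by apply: val_inj.
- by have -> : Ordinal ha = e1 by apply: val_inj.
Qed.

Lemma all3I (P : 'I_3 -> Prop) : P c0 -> P c1 -> P c2 -> forall a, P a.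
Proof.
move=> h0 h1 h2 [[|[|[|?]]] ha] //.
- by have -> : Ordinal ha = c0 by apply: val_inj.
- by have -> : Ordinal ha = c1 by apply: val_inj.
- by have -> : Ordinal ha = c2 by apply: val_inj.
Qed.

Lemma rot3 (V : zmodType) (x y z : V) : x + y + z = y + z + x.
Proof. by rewrite [x + y]addrC -addrA [x + z]addrC addrA. Qed.

Lemma three_vals (x y z : nat) : (x < y)%N -> (y < z)%N -> (z < 3)%N ->
  [/\ x = 0%N, y = 1%N & z = 2%N].
Proof. move=> *; split; lia. Qed.

Lemma sub3_lt (x : 'I_(3 + 3)) : (x - 3 < 3)%N.
Proof. have := ltn_ord x; lia. Qed.

Lemma sub3_neq (x y : nat) : (3 <= x)%N -> (x < y)%N -> (x - 3 = y - 3)%N -> False.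
Proof. lia. Qed.

Unset Implicit Arguments.
Theorem lemma5p9 (F : finFieldType) (g : F) (l : nat)
    (a a' a'' b b' b'' : F) :
  (3 %| #|F|.-1)%N ->
  3.-primitive_root g ->
  (9 %| l)%N ->
  a != 0 -> a' != 0 -> a'' != 0 -> b != 0 -> b' != 0 -> b'' != 0 ->
  (forall Z : 'I_3 -> 'I_(l %/ 3) -> 'I_l, perfect_colored_matching Z ->
     forall lam : F, lam != 0 ->
       subspace_cond 3 (AW g a a' a'' b b' b'' Z lam) (SW Z)) ->
  forall X Y : 'I_3 -> 'I_(l %/ 3) -> 'I_l,
    perfect_colored_matching X -> perfect_colored_matching Y ->
    pairing_condition X Y ->
  forall lx ly : F, lx != 0 -> ly != 0 -> lx ^+ 6 != ly ^+ 6 ->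
    subspace_cond 3
      (famU (AW g a a' a'' b b' b'' X lx) (AW g a a' a'' b b' b'' Y ly))
      (famU (SW X) (SW Y)).
Proof.
move=> _ hprim _ ha ha' ha'' hb hb' hb'' H X Y hX hY [pXY pYX] lx ly hlx hly h6.
have g3 : g ^+ 3 = 1 := prim_expr_order hprim.
have g1 : g != 1 by have := prim_order_dvd hprim 1; rewrite expr1 => <-.
have hg1 : g - 1 != 0 by rewrite subr_eq0.
have hg2 : g ^+ 2 = -1 - g.
  have e : (g - 1) * (g ^+ 2 + g + 1) = g ^+ 3 - 1 by ring.
  rewrite g3 subrr in e; move/eqP: e; rewrite mulf_eq0 (negPf hg1) /= => /eqP e2.
  have -> : -1 - g = -1 - g + (g ^+ 2 + g + 1) by rewrite e2 addr0.
  ring.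
have l3 : lx ^+ 3 != ly ^+ 3.
  apply: contra h6 => /eqP e; by rewrite (_ : 6 = 3 * 2)%N // !exprM e.
have l6 : (lx ^+ 3) ^+ 2 != (ly ^+ 3) ^+ 2 by rewrite -!exprM.
have cub1 : forall u x : F, x \in [:: u; u * g ^+ 2; u * g] -> x ^+ 3 = u ^+ 3.
  move=> u x; rewrite !inE => /or3P [] /eqP -> //;
    [exact: (cube_g g3 u 2) | exact: (cube_g g3 u 1)].
have cub2 : forall u x : F, x \in [:: u ^+ 2; (u * g ^+ 2) ^+ 2; (u * g) ^+ 2] ->
    x ^+ 3 = (u ^+ 3) ^+ 2.
  move=> u x; rewrite !inE => /or3P [] /eqP ->; rewrite exprAC //;
    [by rewrite (cube_g g3 u 2) | by rewrite (cube_g g3 u 1)].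
have hne1 : forall x y, x \in [:: lx; lx * g ^+ 2; lx * g] ->
    y \in [:: ly; ly * g ^+ 2; ly * g] -> x != y.
  move=> x y hx hy; apply/eqP => exy; move/eqP: l3; apply.
  by rewrite -(cub1 _ _ hx) -(cub1 _ _ hy) exy.
have hne2 : forall x y, x \in [:: lx ^+ 2; (lx * g ^+ 2) ^+ 2; (lx * g) ^+ 2] ->
    y \in [:: ly ^+ 2; (ly * g ^+ 2) ^+ 2; (ly * g) ^+ 2] -> x != y.
  move=> x y hx hy; apply/eqP => exy; move/eqP: l6; apply.
  by rewrite -(cub2 _ _ hx) -(cub2 _ _ hy) exy.
set FX := AW g a a' a'' b b' b'' X lx.
set FY := AW g a a' a'' b b' b'' Y ly.
have HX : subspace_cond 3 FX (SW X) := H X hX lx hlx.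
have HY : subspace_cond 3 FY (SW Y) := H Y hY ly hly.
have [uX rkX iX iiX iiiX] := HX.
have [uY rkY iY iiY iiiY] := HY.
have shX := AWp hg2 hg1 ha ha' ha'' hb hb' hb'' hX lx.
have shY := AWp hg2 hg1 ha ha' ha'' hb hb' hb'' hY ly.
have cXY : forall p k, comm (FX p) (colorset Y k).
  move=> p k; apply: (AWc hg2 hg1 ha ha' ha'' hb hb' hb'' hX) => i c c'.
  exact: (close_gen hY pXY).
have cYX : forall p k, comm (FY p) (colorset X k).
  move=> p k; apply: (AWc hg2 hg1 ha ha' ha'' hb hb' hb'' hY) => i c c'.
  exact: (close_gen hX pYX).
have injXY : forall p p' (z : 'rV[F]_l), z *m FX p = z *m FY p' -> z = 0.
  move=> p p' z hz; have [q [r [pq qr pr shA]]] := shX p.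
  have [q' [r' [pq' qr' pr' shB]]] := shY p'.
  exact: (DiffInv (pcm_part hX pq qr pr) (pcm_part hY pq' qr' pr') shA shB
    (cYX p' p) (cYX p' q) (cYX p' r) hne1 hz).
have injXY2 : forall p p' (z : 'rV[F]_l), z *m (FX p *m FX p) = z *m (FY p' *m FY p') -> z = 0.
  move=> p p' z hz; have [q [r [pq qr pr shA]]] := shX p.
  have [q' [r' [pq' qr' pr' shB]]] := shY p'.
  exact: (DiffInv (pcm_part hX pq qr pr) (pcm_part hY pq' qr' pr') (shape_sq shA) (shape_sq shB)
    (comm_sq (cYX p' p)) (comm_sq (cYX p' q)) (comm_sq (cYX p' r)) hne2 hz).
have injXs : forall p s, s \in [:: ly; ly * g ^+ 2; ly * g] ->
    forall z : 'rV[F]_l, z *m FX p = s *: z -> z = 0.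
  move=> p s hs z hz; have [q [r [pq qr pr shA]]] := shX p.
  apply: (Lsc (pcm_part hX pq qr pr) shA _ _ _ hz); rewrite eq_sym; apply: hne1 => //;
    by rewrite !inE eqxx ?orbT.
have injYs : forall p s, s \in [:: lx; lx * g ^+ 2; lx * g] ->
    forall z : 'rV[F]_l, z *m FY p = s *: z -> z = 0.
  move=> p s hs z hz; have [q [r [pq qr pr shB]]] := shY p.
  apply: (Lsc (pcm_part hY pq qr pr) shB _ _ _ hz); apply: hne1 => //;
    by rewrite !inE eqxx ?orbT.
have unitU : forall i, famU FX FY i \in unitmx.
  by move=> i; rewrite /famU; case: (split i) => x; [apply: uX | apply: uY].
split.
- exact: unitU.
- by move=> i; rewrite /famU; case: (split i) => x; [apply: rkX | apply: rkY].
- by move=> i; rewrite /famU; case: (split i) => x; [apply: iX | apply: iY].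
- move=> i j; rewrite /famU; case: splitP => x hx; case: splitP => y hy neq.
  + apply: iiX; apply: contra neq => /eqP exy; apply/eqP; apply: val_inj.
    by rewrite /= hx hy exy.
  + by apply: cross_ii => //; apply: cYX.
  + by apply: cross_ii => //; apply: cXY.
  + apply: iiY; apply: contra neq => /eqP exy; apply/eqP; apply: val_inj.
    by rewrite /= hx hy exy.
move=> t s c hs hc; apply/unit_blockP.
case: t s c hs hc => [|[|[|[|t]]]] s c hs hc z hz.
- by case.
- have h0 := hz ord0; rewrite big_ord1 in h0.
  have z0 := cancel_unit (unit_exp _ (unitU (s ord0))) h0.
  by move=> a'''; rewrite (ord1 a''').
- have hs01 : (s e0 < s e1)%N by apply: hs.
  have hc01 : (c e0 < c e1)%N by apply: hc.
  case: (ltnP (s e1) 3) => h1.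
    apply: (fromX HX hs hc) hz; apply: all2I => //; exact: ltn_trans hs01 h1.
  case: (ltnP (s e0) 3) => h0; last first.
    apply: (fromY HY hs hc) hz; apply: all2I => //; exact: leq_trans h0 (ltnW hs01).
  have hz0 := hz e0; have hz1 := hz e1; rewrite sum2 in hz0; rewrite sum2 in hz1.
  rewrite (famU_lo _ _ h0) (famU_hi _ _ h1) in hz0 hz1.
  have [] := mixed2 (uX _) (uY _) (injXY _ _) (injXY2 _ _) hc01 (ltn_ord _) hz0 hz1.
  by move=> q0 q1; apply: all2I.
- have hs01 : (s c0 < s c1)%N by apply: hs.
  have hs12 : (s c1 < s c2)%N by apply: hs.
  have hc01 : (c c0 < c c1)%N by apply: hc.
  have hc12 : (c c1 < c c2)%N by apply: hc.
  have [ec0 ec1 ec2] := three_vals hc01 hc12 (ltn_ord (c c2)).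
  case: (ltnP (s c2) 3) => h2.
    apply: (fromX HX hs hc) hz; apply: all3I => //.
    - exact: ltn_trans (ltn_trans hs01 hs12) h2.
    - exact: ltn_trans hs12 h2.
  case: (ltnP (s c0) 3) => h0; last first.
    apply: (fromY HY hs hc) hz; apply: all3I => //.
    - exact: ltn_trans h0 hs01.
  have hz0 := hz c0; have hz1 := hz c1; have hz2 := hz c2.
  rewrite sum3 ec0 expr0 -!idmxE !mulmx1 in hz0.
  rewrite sum3 ec1 !expr1 in hz1.
  rewrite sum3 ec2 !expr2 -!mulmxE in hz2.
  case: (ltnP (s c1) 3) => h1.
  + rewrite (famU_lo _ _ h0) (famU_lo _ _ h1) (famU_hi _ _ h2) in hz1 hz2.
    have p12 : (inord (s c0) : 'I_3) != inord (s c1).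
      apply/eqP => /(congr1 val); rewrite /= !inordK // => e.
      by move: hs01; rewrite e ltnn.
    have [q [r [pq qr pr shB]]] := shY (inord (s c2 - 3)).
    have [] := Stage3 (pcm_part hY pq qr pr) shB (cXY _ _) (cXY _ _) (cXY _ _)
      (cXY _ _) (cXY _ _) (cXY _ _) (injXs _) (injXs _) (inj_fam HX p12) hz0 hz1 hz2.
    by move=> q0 q1 q2; apply: all3I.
  + rewrite (famU_lo _ _ h0) (famU_hi _ _ h1) (famU_hi _ _ h2) in hz1 hz2.
    have p23 : (inord (s c1 - 3) : 'I_3) != inord (s c2 - 3).
      apply/eqP => /(congr1 val); rewrite /= !inordK ?sub3_lt // => e.
      exact: sub3_neq h1 hs12 e.
    have [q [r [pq qr pr shA]]] := shX (inord (s c0)).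
    rewrite rot3 in hz0; rewrite rot3 in hz1; rewrite rot3 in hz2.
    have [] := Stage3 (pcm_part hX pq qr pr) shA (cYX _ _) (cYX _ _) (cYX _ _)
      (cYX _ _) (cYX _ _) (cYX _ _) (injYs _) (injYs _) (inj_fam HY p23) hz0 hz1 hz2.
    by move=> q1 q2 q0; apply: all3I.
- exfalso.
  have x1 : (c (inord 0) < c (inord 1))%N by apply: hc; rewrite !inordK.
  have x2 : (c (inord 1) < c (inord 2))%N by apply: hc; rewrite !inordK.
  have x3 : (c (inord 2) < c (inord 3))%N by apply: hc; rewrite !inordK.
  have y1 := leq_ltn_trans (leq0n _) x1.
  have y2 := leq_ltn_trans y1 x2.
  have y3 := leq_ltn_trans y2 x3.
  by have := ltn_ord (c (inord 3)); rewrite ltnNge y3.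
Qed.
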